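(* Let $\mathcal{S}\subseteq\mathcal{L}$ and $\phi\in\mathcal{L}$, let $\mathcal{AF}_{\vdash}=(\vdash,\overline{\cdot},\mathsf{id})$ be contrapositable with $\vdash$ satisfying Cut, and suppose that for every maximal $\mathcal{AF}_{\vdash}(\mathcal{S})$-consistent set $\Theta$ there is $\Theta'\subseteq\Theta$ with $\Theta'\vdash\phi$. Then the maximal $\mathcal{AF}_{\vdash}(\mathcal{S})$-consistent subsets of $\mathcal{S}$ are exactly the maximal $\mathcal{AF}_{\vdash^{+\phi}}(\mathcal{S})$-consistent subsets of $\mathcal{S}$.
   Context: $\mathcal{L}$ is a set of formulas; ${\vdash}\subseteq\wp_{\sf fin}(\mathcal{L})\times\mathcal{L}$ is arbitrary and $\overline{\cdot}:\mathcal{L}\to\wp(\mathcal{L})$. $\vdash^{+\phi}$ is the transitive closure of ${\vdash}\cup\{(\emptyset,\phi)\}$. Cut: for every $\phi$ and finite $\Gamma,\Delta$, if $\Gamma\vdash\phi$ and $\Delta\vdash^{+\phi}\gamma$ then $\Gamma\cup\Delta\vdash\gamma$. Contrapositable: for all finite $\Theta$, if $\Theta\vdash\gamma'$ with $\gamma'\in\overline{\gamma}$, then for every $\sigma\in\Theta$, $(\Theta\cup\{\gamma\})\setminus\{\sigma\}\vdash\sigma'$ for some $\sigma'\in\overline{\sigma}$. For a relation $\vdash'$ (here $\vdash$ or $\vdash^{+\phi}$), $\Theta\subseteq\mathcal{S}$ is $\mathcal{AF}_{\vdash'}(\mathcal{S})$-inconsistent iff there are $\Theta'\subseteq\Theta$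 and $\gamma\in\Theta'$ with $\Theta'\setminus\{\gamma\}\vdash'\gamma'$ for some $\gamma'\in\overline{\gamma}$, consistent otherwise; maximal consistent = consistent with no consistent proper superset within $\mathcal{S}$. *)

(* Defs.v *)
From HB Require Import structures.
From mathcomp Require Import all_boot finmap.
Set Implicit Arguments. Unset Strict Implicit. Unset Printing Implicit Defensive.
Local Open Scope fset_scope.

Definition drel (L : choiceType) := {fset L} -> L -> Prop.

(* |-^{+phi}: closure of |- U {(emptyset, phi)} under transitivity
   (cut-composition of derivations). *)
Inductive plus_rel (L : choiceType) (der : drel L) (phi : L) : {fset L} -> L -> Prop :=
| plus_base (G : {fset L}) (g : L) : der G g -> plus_rel der phi G g
| plus_phi : plus_rel der phi fset0 phi
| plus_trans (G D : {fset L}) (psi g : L) :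
    plus_rel der phi G psi -> plus_rel der phi D g -> psi \in D ->
    plus_rel der phi (G `|` (D `\ psi)) g.

Definition cut_rule (L : choiceType) (der : drel L) : Prop :=
  forall (phi : L) (G D : {fset L}) (g : L),
    der G phi -> plus_rel der phi D g -> der (G `|` D) g.

(* Contrapositability; [bar g g'] means g' \in overline{g}. *)
Definition contrapositable (L : choiceType) (der : drel L) (bar : L -> L -> Prop) : Prop :=
  forall (T : {fset L}) (g g' : L), bar g g' -> der T g' ->
    forall s : L, s \in T -> exists s' : L, bar s s' /\ der ((T `|` [fset g]) `\ s) s'.

Definition af_inconsistent (L : choiceType) (der : drel L) (bar : L -> L -> Prop)
  (Th : L -> Prop) : Prop :=
  exists (T' : {fset L}) (g : L),
    (forall x, x \in T' -> Th x) /\ g \in T' /\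
    exists g' : L, bar g g' /\ der (T' `\ g) g'.

Definition af_consistent (L : choiceType) (der : drel L) (bar : L -> L -> Prop)
  (S Th : L -> Prop) : Prop :=
  (forall x, Th x -> S x) /\ ~ af_inconsistent der bar Th.

Definition af_max_consistent (L : choiceType) (der : drel L) (bar : L -> L -> Prop)
  (S Th : L -> Prop) : Prop :=
  af_consistent der bar S Th /\
  forall Th2 : L -> Prop, af_consistent der bar S Th2 ->
    (forall x, Th x -> Th2 x) -> (forall x, Th2 x -> Th x).

(* Main.v *)
Require Import Defs.
From mathcomp Require Import all_boot finmap.
From mathcomp Require Import classical_sets boolp.
From Stdlib Require Import Classical_Prop.
Local Open Scope fset_scope.

Section S.
Variables (L : choiceType) (der : drel L) (bar : L -> L -> Prop).

Lemma incons_mono (Th Th' : L -> Prop) :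
  (forall x, Th x -> Th' x) -> af_inconsistent der bar Th -> af_inconsistent der bar Th'.
Proof.
move=> sub [T' [g [HT [gin [g' [b d]]]]]].
exists T', g; split; first by move=> x /HT /sub.
by split => //; exists g'.
Qed.

Lemma incons_plus phi (Th : L -> Prop) :
  af_inconsistent der bar Th -> af_inconsistent (plus_rel der phi) bar Th.
Proof.
move=> [T' [g [HT [gin [g' [b d]]]]]].
exists T', g; split => //; split => //; exists g'; split => //.
exact: plus_base.
Qed.

Lemma seq_chain (F : set (set L)) (Th2 : L -> Prop) (s : seq L) :
  total_on F subset ->
  (forall x, x \in s -> (exists2 X, F X & X x) \/ Th2 x) ->
  (forall x, x \in s -> Th2 x) \/
  exists X, F X /\ forall x, x \in s -> X x \/ Th2 x.
Proof.
move=> tot; elim: s => [|a s IH] H.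
  by left.
have H' : forall x, x \in s -> (exists2 X, F X & X x) \/ Th2 x.
  by move=> x xs; apply: H; rewrite inE xs orbT.
have Ha := H a (mem_head _ _).
case: (IH H') => [HT|[X [FX HX]]].
  case: Ha => [[Y FY Ya]|Ha].
    right; exists Y; split => // x; rewrite inE => /orP [/eqP->|xs]; first by left.
    by right; apply: HT.
  left => x; rewrite inE => /orP [/eqP->|xs] //; exact: HT.
case: Ha => [[Y FY Ya]|Ha].
  case: (tot X Y FX FY) => sub.
    right; exists Y; split => // x; rewrite inE => /orP [/eqP->|xs]; first by left.
    by case: (HX x xs) => [/sub|]; [left|right].
  right; exists X; split => // x; rewrite inE => /orP [/eqP->|xs]; first by left; apply: sub.
  exact: HX.
right; exists X; split => // x; rewrite inE => /orP [/eqP->|xs]; first by right.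
exact: HX.
Qed.

Lemma extend_max (S Th2 : L -> Prop) :
  af_consistent der bar S Th2 ->
  exists Th3 : L -> Prop, af_max_consistent der bar S Th3 /\ forall x, Th2 x -> Th3 x.
Proof.
move=> [Th2S Th2c].
pose P : set (set L) := fun X => af_consistent der bar S (fun x => X x \/ Th2 x).
have [|A [PA Amax]] := @Zorn_bigcup L P.
  move=> F FP tot; split.
    move=> x [[X FX Xx]|]; last exact: Th2S.
    by case: (FP X FX) => HS _; apply: HS; left.
  move=> [T' [g [HT [gin [g' [b d]]]]]].
  case: (@seq_chain F Th2 T' tot HT) => [H2|[X [FX HX]]].
    apply: Th2c; exists T', g; split => //; split => //; by exists g'.
  case: (FP X FX) => _; apply; exists T', g; split => //; split => //; by exists g'.
exists (fun x => A x \/ Th2 x); split; last by move=> x; right.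
split => // Th4 [Th4S Th4c] sub x Th4x.
apply: NNPP => nx.
have PTh4 : P Th4.
  split; first by move=> y [|] => [|/Th2S] //; exact: Th4S.
  move=> inc; apply: Th4c; apply: incons_mono inc => y [] // /(fun h => sub y (or_intror h)).
  done.
apply: (Amax Th4) => //; split.
  by move=> y Ay; apply: sub; left.
move=> Th4A; apply: nx; left; exact: Th4A.
Qed.

End S.

Theorem lemma11 (L : choiceType) (der : drel L) (bar : L -> L -> Prop)
  (S : L -> Prop) (phi : L) :
  contrapositable der bar -> cut_rule der ->
  (forall Th : L -> Prop, af_max_consistent der bar S Th ->
     exists T' : {fset L}, (forall x, x \in T' -> Th x) /\ der T' phi) ->
  forall Th : L -> Prop,
    af_max_consistent der bar S Th <-> af_max_consistent (plus_rel der phi) bar S Th.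
Proof.
move=> contra cut hyp.
have B : forall Th, af_max_consistent der bar S Th ->
    ~ af_inconsistent (plus_rel der phi) bar Th.
  move=> Th Hmax [T' [g [HT [gin [g' [b d]]]]]].
  have [T0 [HT0 d0]] := hyp Th Hmax.
  have dn := cut _ _ _ _ d0 d.
  case: Hmax => [[_ Hc] _]; apply: Hc.
  set Tn := T0 `|` (T' `\ g) in dn.
  have sub : forall x, x \in Tn `|` [fset g] -> Th x.
    move=> x; rewrite !inE => /orP [/orP [/HT0|/andP [_ /HT]]|/eqP ->] //.
    exact: HT.
  exists (Tn `|` [fset g]), g; split => //; split; first by rewrite !inE eqxx orbT.
  case gTn: (g \in Tn).
    have [s' [bs ds]] := contra _ _ _ b dn g gTn.
    by exists s'.
  exists g'; split => //.
  have -> : (Tn `|` [fset g]) `\ g = Tn => //.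
  apply/fsetP => x; rewrite !inE; case: (eqVneq x g) => [->|] /=.
    by move: gTn; rewrite /Tn !inE eqxx /= => ->.
  by rewrite orbF.
move=> Th; split.
  move=> Hmax; split.
    by split; [case: Hmax => [[]]|exact: B].
  move=> Th2 [Th2S Th2c] sub; case: Hmax => _; apply => //.
  split => // inc; apply: Th2c; exact: incons_plus.
move=> [[ThS Thc] Hm].
have Thc' : af_consistent der bar S Th.
  by split => // inc; apply: Thc; exact: incons_plus.
split => // Th2 Th2c sub x Th2x.
have [Th3 [H3 sub3]] := @extend_max L der bar S Th2 Th2c.
apply: (Hm Th3) => //.
  split; first by case: H3 => [[]].
  exact: B.
by move=> y /sub /sub3.
by apply: sub3.
Qed.
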